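(* Let $\Omega\subseteq\mathbb{R}^n$ be open and let $\mathcal{F}\subseteq C(\Omega)$ be a set of continuous real functions on $\Omega$. Then the interval hull $\mathrm{hull}(\mathcal{F})$ is a D-continuous interval function.
   Context: $\overline{\mathbb{R}}=\mathbb{R}\cup\{\pm\infty\}$, $\mathbb{I}\overline{\mathbb{R}}$ is the set of closed intervals $[\underline a,\overline a]$ with $\underline a\le\overline a$ in $\overline{\mathbb{R}}$, $a\in\overline{\mathbb{R}}$ identified with $[a,a]$. $\mathbb{A}(X)$ is the set of functions $X\to\mathbb{I}\overline{\mathbb{R}}$, written $f=[\underline f,\overline f]$. A function $\psi=[\underline\psi,\overline\psi]\in\mathbb{A}(\Omega)$ is called continuous if $\underline\psi$ and $\overline\psi$ are continuous extended-real-valued functions. A continuous interval enclosure of $\mathcal{F}$ is a continuous $\psi\in\mathbb{A}(\Omega)$ with $\phi(x)\in\psi(x)$ for all $x\in\Omega$, $\phi\in\mathcal{F}$; with $\hat{\mathcal{F}}$ the set of all such enclosures, $\mathrm{hull}(\mathcal{F})(x)=\bigcap_{\psi\in\hat{\mathcal{F}}}\psi(x)$. $B_\delta(x)=\{y\in\Omega:\|x-y\|<\delta\}$. For dense $D\subseteq\Omega$ and $f\in\mathbb{A}(D)$: $I(D,\Omega,f)(x)=\sup_{\delta>0}\inf\{z\in f(y):y\in B_\delta(x)\cap D\}$, $S(D,\Omega,f)(x)=\inf_{\delta>0}\sup\{z\in f(y):y\in B_\delta(x)\cap D\}$, $F(D,\Omega,f)(x)=[I(D,\Omega,f)(x),S(D,\Omega,f)(x)]$.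 $f\in\mathbb{A}(\Omega)$ is D-continuous if $F(D,\Omega,f)=f$ for every dense subset $D$ of $\Omega$. *)

(* Defs.v *)
From HB Require Import structures.
From mathcomp Require Import all_boot all_order all_algebra.
From mathcomp Require Import all_classical all_reals all_analysis.
Set Implicit Arguments. Unset Strict Implicit. Unset Printing Implicit Defensive.
Import Order.TTheory GRing.Theory Num.Theory.
Import numFieldNormedType.Exports.
Local Open Scope classical_set_scope.
Local Open Scope ring_scope.

(* A function in A(Omega) is represented by its two endpoint functions
   lo, hi : 'rV[R]_n -> \bar R (values outside Omega are irrelevant). *)
Record ifun (R : realType) (n : nat) := IFun {
  ilo : 'rV[R]_n -> \bar R ;
  ihi : 'rV[R]_n -> \bar R }.

Definition is_ifun (R : realType) (n : nat) (Om : set 'rV[R]_n) (f : ifun R n) :=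
  forall x, Om x -> (ilo f x <= ihi f x)%E.

Definition imem (R : realType) (n : nat) (f : ifun R n) (x : 'rV[R]_n) (z : \bar R) :=
  (ilo f x <= z <= ihi f x)%E.

Definition icontinuous (R : realType) (n : nat) (Om : set 'rV[R]_n) (f : ifun R n) :=
  is_ifun Om f /\ {within Om, continuous (ilo f)} /\ {within Om, continuous (ihi f)}.

Definition enclosure (R : realType) (n : nat) (Om : set 'rV[R]_n)
    (Fam : set ('rV[R]_n -> R)) (psi : ifun R n) :=
  icontinuous Om psi /\ forall x phi, Om x -> Fam phi -> imem psi x (phi x)%:E.

Definition hull (R : realType) (n : nat) (Om : set 'rV[R]_n)
    (Fam : set ('rV[R]_n -> R)) (x : 'rV[R]_n) : set (\bar R) :=
  [set z | forall psi, enclosure Om Fam psi -> imem psi x z].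

Definition Bdelta (R : realType) (n : nat) (Om : set 'rV[R]_n) (x : 'rV[R]_n) (d : R) :=
  [set y | Om y /\ `|x - y| < d].

Definition I_op (R : realType) (n : nat) (D Om : set 'rV[R]_n) (f : ifun R n)
    (x : 'rV[R]_n) : \bar R :=
  ereal_sup [set ereal_inf [set z | exists y, (Bdelta Om x d `&` D) y /\ imem f y z]
            | d in [set d : R | 0 < d]].

Definition S_op (R : realType) (n : nat) (D Om : set 'rV[R]_n) (f : ifun R n)
    (x : 'rV[R]_n) : \bar R :=
  ereal_inf [set ereal_sup [set z | exists y, (Bdelta Om x d `&` D) y /\ imem f y z]
            | d in [set d : R | 0 < d]].

Definition dense_in (R : realType) (n : nat) (D Om : set 'rV[R]_n) :=
  D `<=` Om /\ Om `<=` closure D.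

(* f in A(Omega) is D-continuous: F(D,Omega,f) = f for every dense D in Omega *)
Definition D_continuous (R : realType) (n : nat) (Om : set 'rV[R]_n) (f : ifun R n) :=
  forall D, dense_in D Om ->
    forall x, Om x -> I_op D Om f x = ilo f x /\ S_op D Om f x = ihi f x.

(* Main.v *)
Require Import Defs.
From HB Require Import structures.
From mathcomp Require Import all_boot all_order all_algebra.
From mathcomp Require Import all_classical all_reals all_analysis.
Import Order.TTheory GRing.Theory Num.Theory.
Import numFieldNormedType.Exports.
Local Open Scope classical_set_scope.
Local Open Scope ring_scope.
Set Implicit Arguments. Unset Strict Implicit.

Lemma ereal_between (R : realType) (a b : \bar R) : (a < b)%E ->
  exists t : R, (a < t%:E < b)%E.
Proof.
case: a => [a||]; case: b => [b||] //=.
- rewrite lte_fin => /midf_lt [h1 h2]; exists ((a + b) / 2); rewrite !lte_fin.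
  by rewrite h1 h2.
- by move=> _; exists (a + 1); rewrite !lte_fin ltrDl ltr01 ltry.
- by move=> _; exists (b - 1); rewrite !lte_fin ltNyr gtrDl ltrN10.
- by move=> _; exists 0; rewrite ltNyr ltry.
Qed.

Lemma expand_cont (R : realType) (T : topologicalType) (g : T -> R) :
  continuous g -> (forall y, `|g y| <= 1) -> continuous (fun y => expand (g y)).
Proof.
move=> gc g1 y A /= /nbhs_ballP [e e0 eA].
have := gc y (ball (g y) e) (@nbhsx_ballx _ _ (g y) e e0).
move=> h; apply: (@filterS _ _ _ (g @^-1` ball (g y) e)) h => z /= hz; apply: eA.
move: hz; rewrite /ball /= /ereal_ball !expandK ?inE ?g1 //.
Qed.

Lemma bump_enclosure (R : realType) (n : nat) (Om : set 'rV[R]_n)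
  (Fam : set ('rV[R]_n -> R)) (x : 'rV[R]_n) (d t : R) : 0 < d ->
  (forall phi y, Fam phi -> Om y -> `|x - y| < d -> t <= phi y) ->
  exists psi, enclosure Om Fam psi /\ (t%:E <= ilo psi x)%E.
Proof.
move=> d0 Ht.
set c := contract t%:E.
have c1 : `|c| < 1 := contract_lt1 t.
have cN1 : -1 <= c by move: (ltW c1); rewrite ler_norml => /andP[].
pose g := (fun=> -1 : R^o) \max ((fun=> c : R^o) \min (fun y => -1 + (c + 1) * (1 - `|x - y| / d) : R^o)).
have gc : continuous g.
  move=> y; apply: continuous_max; first exact: cst_continuous.
  apply: continuous_min; first exact: cst_continuous.
  apply: continuousD; first exact: cst_continuous.
  apply: continuousM; first exact: cst_continuous.
  apply: continuousB; first exact: cst_continuous.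
  apply: continuousM; last exact: cst_continuous.
  apply: (@cvg_norm _ _ _ (nbhs y)); apply: cvgB; [exact: cvg_cst | exact: cvg_id].
have gc' : forall y, g y <= c.
  move=> y; rewrite /g ge_max cN1 /= ge_min lexx //.
have g1 : forall y, `|g y| <= 1.
  move=> y; rewrite ler_norml; apply/andP; split.
    by rewrite /g le_max lexx.
  apply: (le_trans (gc' y)); move: (ltW c1); rewrite ler_norml => /andP[].
  by [].
exists (IFun (fun y => expand (g y)) (fun _ => +oo%E)); split.
  split; first split.
  - by move=> y _ /=; rewrite leey.
  - split; apply: continuous_subspaceT.
      exact: expand_cont.
    exact: cst_continuous.
  - move=> y phi Oy Fp; rewrite /imem /= leey andbT.
    have [h|h] := ltP `|x - y| d.
      apply: (le_trans (le_expand (gc' y))).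
      by rewrite /c contractK lee_fin; apply: Ht.
    rewrite expandN1 ?leNye //.
    rewrite /g ge_max lexx /= ge_min; apply/orP; right.
    rewrite gerDl; apply: mulr_ge0_le0.
      by rewrite -lerBlDr sub0r.
    by rewrite subr_le0 ler_pdivlMr // mul1r.
have gx : g x = c.
  by rewrite /g /= subrr normr0 mul0r subr0 mulr1 addrC addrK minxx max_r.
by rewrite /= gx /c contractK.
Qed.

Definition Lo (R : realType) (n : nat) (Om : set 'rV[R]_n)
  (Fam : set ('rV[R]_n -> R)) (x : 'rV[R]_n) : \bar R :=
  ereal_sup [set ilo psi x | psi in enclosure Om Fam].

Lemma Lo_le (R : realType) (n : nat) (Om : set 'rV[R]_n)
  (Fam : set ('rV[R]_n -> R)) phi y :
  Fam phi -> Om y -> (Lo Om Fam y <= (phi y)%:E)%E.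
Proof.
move=> Fp Oy; apply: ge_ereal_sup => _ [psi Hpsi <-].
by have /andP[] := Hpsi.2 y phi Oy Fp.
Qed.

Lemma enc_le_Lo (R : realType) (n : nat) (Om : set 'rV[R]_n)
  (Fam : set ('rV[R]_n -> R)) psi y :
  enclosure Om Fam psi -> (ilo psi y <= Lo Om Fam y)%E.
Proof. by move=> Hpsi; apply: ereal_sup_ubound; exists psi. Qed.

Lemma Lo_Dcont (R : realType) (n : nat) (Om : set 'rV[R]_n)
  (Fam : set ('rV[R]_n -> R)) :
  open Om -> (forall phi, Fam phi -> {within Om, continuous phi}) ->
  forall D, dense_in D Om -> forall x, Om x ->
  ereal_sup [set ereal_inf (Lo Om Fam @` (Bdelta Om x d `&` D))
            | d in [set d : R | 0 < d]] = Lo Om Fam x.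
Proof.
move=> oOm Fc D [DOm OmD] x Ox.
apply/eqP; rewrite eq_le; apply/andP; split.
- apply: ge_ereal_sup => _ [d d0 <-].
  rewrite leNgt; apply/negP => /ereal_between [t /andP [h1 h2]].
  have Ht : forall phi y, Fam phi -> Om y -> `|x - y| < d -> t <= phi y.
    move=> phi y Fp Oy xy; rewrite leNgt; apply/negP => pt.
    have := Fc _ Fp; rewrite continuous_open_subspace // => /(_ y (mem_set Oy)) phic.
    have N1 : nbhs y (phi @^-1` [set r | r < t]).
      apply: phic; apply: open_nbhs_nbhs; split; [exact: open_lt | exact: pt].
    have N2 : nbhs y Om by apply: open_nbhs_nbhs; split.
    have N3 : nbhs y (ball x d).
      apply: open_nbhs_nbhs; split; first exact: ball_open.
      by rewrite -ball_normE.
    have [z [Dz [pz [Oz xz]]]] := OmD y Oy _ (filterI N1 (filterI N2 N3)).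
    have : (ereal_inf (Lo Om Fam @` (Bdelta Om x d `&` D)) <= Lo Om Fam z)%E.
      apply: ereal_inf_lbound; exists z => //; split => //; split => //.
      by move: xz; rewrite -ball_normE.
    move/le_trans => /(_ _ (Lo_le Fp Oz)) => h3.
    have pzt : ((phi z)%:E < t%:E)%E by rewrite lte_fin.
    by have := lt_trans h2 (le_lt_trans h3 pzt); rewrite ltxx.
  have [psi [Hpsi tle]] := bump_enclosure d0 Ht.
  have := le_trans tle (enc_le_Lo x Hpsi).
  by rewrite leNgt h1.
- apply: ge_ereal_sup => _ [psi Hpsi <-].
  rewrite leNgt; apply/negP => /ereal_between [t /andP [h1 h2]].
  have : nbhs x (ilo psi @^-1` [set u | (t%:E < u)%E]).
    have := (Hpsi.1).2.1; rewrite continuous_open_subspace // => /(_ x (mem_set Ox)).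
    by apply; exact: open_ereal_gt' h2.
  move/nbhs_ballP => [e e0 He].
  have tJ : (t%:E <= ereal_inf (Lo Om Fam @` (Bdelta Om x e `&` D)))%E.
    apply: le_ereal_inf_tmp => _ [z [[Oz xz] Dz] <-].
    apply: le_trans (enc_le_Lo z Hpsi); apply: ltW; apply: He.
    by rewrite -ball_normE.
  have : (ereal_inf (Lo Om Fam @` (Bdelta Om x e `&` D)) <=
     ereal_sup [set ereal_inf (Lo Om Fam @` (Bdelta Om x d `&` D))
            | d in [set d : R | (0 < d)%R]])%E.
    by apply: ereal_sup_ubound; exists e.
  move/(le_trans tJ); by rewrite leNgt h1.
Qed.

Definition negI (R : realType) (n : nat) (psi : ifun R n) : ifun R n :=
  IFun (fun y => - ihi psi y)%E (fun y => - ilo psi y)%E.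

Lemma enc_neg (R : realType) (n : nat) (Om : set 'rV[R]_n)
  (Fam Fam' : set ('rV[R]_n -> R)) psi :
  (forall phi, Fam' phi -> Fam (fun y => - phi y)) ->
  enclosure Om Fam psi -> enclosure Om Fam' (negI psi).
Proof.
move=> HF [[Hi [Hl Hh]] Hm]; split; first split.
- by move=> y Oy /=; rewrite leeN2; exact: Hi.
- split => /=.
    by move=> y; apply: continuous_comp; [exact: Hh | exact: oppe_continuous].
  by move=> y; apply: continuous_comp; [exact: Hl | exact: oppe_continuous].
- move=> y phi Oy Fp; rewrite /imem /=.
  have /andP[a b] := Hm y (fun y => - phi y) Oy (HF _ Fp).
  by rewrite leeNl -EFinN b /= leeNr -EFinN a.
Qed.

Lemma inf_imem (R : realType) (n : nat) (h : ifun R n) (X : set 'rV[R]_n) :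
  (forall y, X y -> (ilo h y <= ihi h y)%E) ->
  ereal_inf [set z | exists y, X y /\ imem h y z] = ereal_inf (ilo h @` X).
Proof.
move=> H; apply/eqP; rewrite eq_le; apply/andP; split.
- apply: le_ereal_inf_tmp => _ [y Xy <-]; apply: ereal_inf_lbound.
  by exists y; split => //; rewrite /imem lexx /=; exact: H.
- apply: le_ereal_inf_tmp => z [y [Xy /andP[hz _]]]; apply: le_trans hz.
  by apply: ereal_inf_lbound; exists y.
Qed.

Lemma sup_imem (R : realType) (n : nat) (h : ifun R n) (X : set 'rV[R]_n) :
  (forall y, X y -> (ilo h y <= ihi h y)%E) ->
  ereal_sup [set z | exists y, X y /\ imem h y z] = ereal_sup (ihi h @` X).
Proof.
move=> H; apply/eqP; rewrite eq_le; apply/andP; split.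
- apply: ge_ereal_sup => z [y [Xy /andP[_ hz]]]; apply: le_trans hz _.
  by apply: ereal_sup_ubound; exists y.
- apply: ge_ereal_sup => _ [y Xy <-]; apply: ereal_sup_ubound.
  by exists y; split => //; rewrite /imem lexx andbT; exact: H.
Qed.

Unset Implicit Arguments.

Theorem theorem20 (R : realType) (n : nat) (Om : set 'rV[R]_n)
    (Fam : set ('rV[R]_n -> R)) :
  open Om ->
  (forall phi, Fam phi -> {within Om, continuous phi}) ->
  Fam !=set0 ->
  exists h : ifun R n,
    is_ifun Om h /\
    (forall x, Om x -> hull Om Fam x = [set z | imem h x z]) /\
    D_continuous Om h.
Proof.
move=> oOm Fc [phi0 Fp0].
pose negFam : set ('rV[R]_n -> R) := fun f => Fam (fun y => - f y).
have negFamN : forall phi, Fam phi -> negFam (fun y => - phi y).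
  move=> phi Fp; rewrite /negFam.
  by have -> : (fun y => - - phi y) = phi by apply: funext => y; rewrite opprK.
have negFc : forall phi, negFam phi -> {within Om, continuous phi}.
  move=> phi Np; have := Fc _ Np; rewrite !continuous_open_subspace // => h y Oy.
  have -> : phi = (fun y => - (- phi y)) by apply: funext => z; rewrite opprK.
  exact: continuousN (h y Oy).
pose h := IFun (Lo Om Fam) (fun x => - Lo Om negFam x)%E.
have hi : is_ifun Om h.
  move=> x Ox /=; apply: (le_trans (Lo_le Fp0 Ox)).
  by rewrite leeNr -EFinN; exact: (Lo_le (negFamN _ Fp0) Ox).
exists h; split => //; split.
- move=> x Ox; apply/seteqP; split => z.
  + move=> Hz; rewrite /imem /=; apply/andP; split.
      by apply: ge_ereal_sup => _ [psi Hpsi <-]; have /andP[] := Hz psi Hpsi.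
    rewrite leeNr; apply: ge_ereal_sup => _ [psi Hpsi <-].
    have := Hz (negI psi) (enc_neg negFamN Hpsi).
    by rewrite /imem /= leeNr => /andP[].
  + rewrite /imem /= => /andP[a b] psi Hpsi; apply/andP; split.
      exact: le_trans (enc_le_Lo x Hpsi) a.
    have Hn : enclosure Om negFam (negI psi) by apply: enc_neg Hpsi => phi.
    have := enc_le_Lo x Hn; rewrite /= => c.
    move: b; rewrite leeNr => b.
    by rewrite -leeN2; apply: le_trans c b.
- move=> D HD x Ox; split.
  + rewrite /I_op.
    have -> : [set ereal_inf [set z | exists y, (Bdelta Om x d `&` D) y /\ imem h y z]
              | d in [set d : R | 0 < d]] =
              [set ereal_inf (Lo Om Fam @` (Bdelta Om x d `&` D))
              | d in [set d : R | 0 < d]].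
      apply: eq_imagel => d _; rewrite inf_imem //.
      by move=> y [[Oy _] _]; exact: hi.
    exact: Lo_Dcont.
  + rewrite /S_op.
    have -> : [set ereal_sup [set z | exists y, (Bdelta Om x d `&` D) y /\ imem h y z]
              | d in [set d : R | 0 < d]] =
              -%E @` [set ereal_inf (Lo Om negFam @` (Bdelta Om x d `&` D))
              | d in [set d : R | 0 < d]].
      rewrite image_comp; apply: eq_imagel => d _; rewrite sup_imem //; last first.
        by move=> y [[Oy _] _]; exact: hi.
      by rewrite /= -ereal_supN image_comp.
    by rewrite ereal_infN Lo_Dcont.
Qed.
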